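(* If the Noperthedron $\mathcal{N}$ has Rupert's property, then there exist $\theta_1,\theta_2\in[0,2\pi/15]$, $\varphi_1\in[0,\pi]$, $\varphi_2\in[0,\pi/2]$ and $\alpha\in[-\pi/2,\pi/2]$ such that $R(\alpha)M(\theta_1,\varphi_1)\mathcal{N}\subset\operatorname{int}\operatorname{conv}(M(\theta_2,\varphi_2)\mathcal{N})$.
   Context: $R(\alpha)=\begin{pmatrix}\cos\alpha&-\sin\alpha\\ \sin\alpha&\cos\alpha\end{pmatrix}$, $M(\theta,\varphi)=\begin{pmatrix}-\sin\theta&\cos\theta&0\\ -\cos\theta\cos\varphi&-\sin\theta\cos\varphi&\sin\varphi\end{pmatrix}$, acting elementwise on point sets. A pointsymmetric polyhedron $\mathcal{P}$ has Rupert's property if there exist $\theta_1,\theta_2\in[0,2\pi)$, $\varphi_1,\varphi_2\in[0,\pi]$, $\alpha\in[-\pi,\pi)$ with $R(\alpha)M(\theta_1,\varphi_1)\mathcal{P}\subset\operatorname{int}\operatorname{conv}(M(\theta_2,\varphi_2)\mathcal{P})$. Let $R_z(\beta)=\begin{pmatrix}\cos\beta&-\sin\beta&0\\ \sin\beta&\cos\beta&0\\0&0&1\end{pmatrix}$, $\mathcal{C}_{30}=\{(-1)^\ell R_z(2\pi k/15): k=0,\dots,14,\ \ell=0,1\}$, $C_1=\frac{1}{259375205}(152024884,0,210152163)^t$, $C_2=10^{-10}(6632738028,6106948881,3980949609)^t$, $C_3=10^{-10}(8193990033,5298215096,1230614493)^t$; the Noperthedron is $\mathcal{N}=\mathcal{C}_{30}C_1\cup\mathcal{C}_{30}C_2\cup\mathcal{C}_{30}C_3$.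 *)

(* Defs.v *)
From Stdlib Require Import Reals List.
Open Scope R_scope.

Definition pt2 := (R * R)%type.
Definition pt3 := (R * R * R)%type.

Definition rot2 (a : R) (q : pt2) : pt2 :=
  let '(x, y) := q in (cos a * x - sin a * y, sin a * x + cos a * y).

Definition projM (th ph : R) (p : pt3) : pt2 :=
  let '(x, y, z) := p in
  (- sin th * x + cos th * y,
   - cos th * cos ph * x - sin th * cos ph * y + sin ph * z).

Definition rotz (b : R) (p : pt3) : pt3 :=
  let '(x, y, z) := p in (cos b * x - sin b * y, sin b * x + cos b * y, z).

Definition scale3 (c : R) (p : pt3) : pt3 :=
  let '(x, y, z) := p in (c * x, c * y, c * z).

Definition in_C30_orbit (c p : pt3) : Prop :=
  exists (k l : nat), (k <= 14)%nat /\ (l <= 1)%nat /\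
    p = scale3 ((-1) ^ l) (rotz (2 * PI * INR k / 15) c).

Definition C1 : pt3 :=
  (152024884 / 259375205, 0, 210152163 / 259375205).
Definition C2 : pt3 :=
  (6632738028 / 10000000000, 6106948881 / 10000000000, 3980949609 / 10000000000).
Definition C3 : pt3 :=
  (8193990033 / 10000000000, 5298215096 / 10000000000, 1230614493 / 10000000000).

(* the Noperthedron, as its (finite) set of vertices *)
Definition Noperthedron (p : pt3) : Prop :=
  in_C30_orbit C1 p \/ in_C30_orbit C2 p \/ in_C30_orbit C3 p.

Fixpoint wsum (l : list (R * pt2)) : pt2 :=
  match l with
  | nil => (0, 0)
  | (w, (x, y)) :: t => let '(a, b) := wsum t in (w * x + a, w * y + b)
  end.

Fixpoint wtotal (l : list (R * pt2)) : R :=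
  match l with
  | nil => 0
  | (w, _) :: t => w + wtotal t
  end.

Definition conv (S : pt2 -> Prop) (x : pt2) : Prop :=
  exists l : list (R * pt2),
    Forall (fun wp => 0 <= fst wp /\ S (snd wp)) l /\
    wtotal l = 1 /\ wsum l = x.

Definition dist2 (p q : pt2) : R :=
  sqrt ((fst p - fst q) ^ 2 + (snd p - snd q) ^ 2).

Definition interior (A : pt2 -> Prop) (x : pt2) : Prop :=
  exists eps, 0 < eps /\ forall y, dist2 x y < eps -> A y.

Definition imgM (th ph : R) (P : pt3 -> Prop) (q : pt2) : Prop :=
  exists p, P p /\ q = projM th ph p.

Definition rupert_config (P : pt3 -> Prop) (th1 ph1 th2 ph2 a : R) : Prop :=
  forall p, P p -> interior (conv (imgM th2 ph2 P)) (rot2 a (projM th1 ph1 p)).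

Definition rupert (P : pt3 -> Prop) : Prop :=
  exists th1 th2 ph1 ph2 a,
    0 <= th1 < 2 * PI /\ 0 <= th2 < 2 * PI /\
    0 <= ph1 <= PI /\ 0 <= ph2 <= PI /\ - PI <= a < PI /\
    rupert_config P th1 ph1 th2 ph2 a.

(* Main.v *)
Require Import Defs.
From Stdlib Require Import Reals List Lra Lia.
Open Scope R_scope.

Definition Fl (q : pt2) : pt2 := let '(x, y) := q in (- x, y).
Definition neg2 (q : pt2) : pt2 := let '(x, y) := q in (- x, - y).

Lemma Fl_invol q : Fl (Fl q) = q.
Proof. destruct q; simpl; f_equal; ring. Qed.

Lemma projM_rotz th ph b p : projM th ph (rotz b p) = projM (th - b) ph p.
Proof. destruct p as [[x y] z]; simpl; rewrite cos_minus, sin_minus; f_equal; ring. Qed.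

Lemma projM_scale th ph p : projM th ph (scale3 (-1) p) = neg2 (projM th ph p).
Proof. destruct p as [[x y] z]; simpl; f_equal; ring. Qed.

Lemma rot2_plusPI a q : rot2 (a + PI) q = rot2 a (neg2 q).
Proof. destruct q; simpl; rewrite neg_cos, neg_sin; f_equal; ring. Qed.

Lemma projM_refl th ph p : projM (th + PI) (PI - ph) p = Fl (projM th ph p).
Proof.
  destruct p as [[x y] z]; simpl; rewrite neg_cos, neg_sin, sin_PI_x, cos_minus, cos_PI, sin_PI.
  f_equal; ring.
Qed.

Lemma rot2_refl a q : rot2 (- a) (Fl q) = Fl (rot2 a q).
Proof. destruct q; simpl; rewrite cos_neg, sin_neg; f_equal; ring. Qed.

Lemma conv_mono (S S' : pt2 -> Prop) : (forall y, S y -> S' y) -> forall x, conv S x -> conv S' x.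
Proof.
  intros H x [l [H1 [H2 H3]]]. exists l; split; [|split; auto].
  eapply Forall_impl; [|exact H1]. simpl; intros wp [? ?]; split; auto.
Qed.

Lemma interior_mono (A A' : pt2 -> Prop) : (forall y, A y -> A' y) -> forall x, Defs.interior A x -> Defs.interior A' x.
Proof. intros H x [e [He H1]]. exists e; split; auto. Qed.

Lemma conv_Fl S x : conv S x -> conv (fun y => S (Fl y)) (Fl x).
Proof.
  intros [l [H1 [H2 H3]]].
  exists (map (fun wp => (fst wp, Fl (snd wp))) l).
  assert (Ht : forall l, wtotal (map (fun wp => (fst wp, Fl (snd wp))) l) = wtotal l).
  { induction l0 as [|[w q] t IH]; simpl; auto. rewrite IH; auto. }
  assert (Hs : forall l, wsum (map (fun wp => (fst wp, Fl (snd wp))) l) = Fl (wsum l)).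
  { induction l0 as [|[w [u v]] t IH]; simpl. f_equal; ring.
    rewrite IH. destruct (wsum t); simpl. f_equal; ring. }
  split; [|split].
  - apply Forall_map. eapply Forall_impl; [|exact H1]. simpl; intros wp [? ?].
    rewrite Fl_invol; auto.
  - rewrite Ht; auto.
  - rewrite Hs, H3; auto.
Qed.

Lemma dist2_Fl x y : dist2 (Fl x) y = dist2 x (Fl y).
Proof. destruct x, y; unfold dist2; simpl; f_equal; ring. Qed.

Lemma interior_conv_Fl S x : Defs.interior (conv S) x -> Defs.interior (conv (fun y => S (Fl y))) (Fl x).
Proof.
  intros [e [He H]]. exists e; split; auto. intros y Hy.
  rewrite dist2_Fl in Hy. rewrite <- (Fl_invol y). apply conv_Fl, H, Hy.
Qed.

Lemma rotz_scale b s p : rotz b (scale3 s p) = scale3 s (rotz b p).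
Proof. destruct p as [[x y] z]; simpl; apply (f_equal2 pair); [apply (f_equal2 pair)|]; ring. Qed.

Lemma rotz_rotz b1 b2 p : rotz b1 (rotz b2 p) = rotz (b1 + b2) p.
Proof. destruct p as [[x y] z]; simpl; rewrite cos_plus, sin_plus; apply (f_equal2 pair); [apply (f_equal2 pair)|]; ring. Qed.

Lemma rotz_2PI b p : rotz (b + 2 * PI) p = rotz b p.
Proof. destruct p as [[x y] z]; simpl; rewrite cos_plus, sin_plus, cos_2PI, sin_2PI; apply (f_equal2 pair); [apply (f_equal2 pair)|]; ring. Qed.

Lemma scale_scale a b p : scale3 a (scale3 b p) = scale3 (a * b) p.
Proof. destruct p as [[x y] z]; simpl; apply (f_equal2 pair); [apply (f_equal2 pair)|]; ring. Qed.

Lemma orbit_rot c p : in_C30_orbit c p -> in_C30_orbit c (rotz (2 * PI / 15) p).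
Proof.
  intros [k [l [Hk [Hl ->]]]]. rewrite rotz_scale, rotz_rotz.
  destruct (Nat.eq_dec k 14) as [->|Hne].
  - exists 0%nat, l; split; [lia|split; [lia|]].
    replace (2 * PI / 15 + 2 * PI * INR 14 / 15) with (2 * PI * INR 0 / 15 + 2 * PI)
      by (simpl; field). rewrite rotz_2PI; auto.
  - exists (S k), l; split; [lia|split; [lia|]].
    replace (2 * PI / 15 + 2 * PI * INR k / 15) with (2 * PI * INR (S k) / 15)
      by (rewrite S_INR; field). auto.
Qed.

Lemma orbit_rotm c p : in_C30_orbit c p -> in_C30_orbit c (rotz (- (2 * PI / 15)) p).
Proof.
  intros [k [l [Hk [Hl ->]]]]. rewrite rotz_scale, rotz_rotz.
  destruct k as [|k].
  - exists 14%nat, l; split; [lia|split; [lia|]].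
    rewrite <- (rotz_2PI (- (2 * PI / 15) + 2 * PI * INR 0 / 15)).
    replace (- (2 * PI / 15) + 2 * PI * INR 0 / 15 + 2 * PI) with (2 * PI * INR 14 / 15)
      by (simpl; field). auto.
  - exists k, l; split; [lia|split; [lia|]].
    replace (- (2 * PI / 15) + 2 * PI * INR (S k) / 15) with (2 * PI * INR k / 15)
      by (rewrite S_INR; field). auto.
Qed.

Lemma orbit_neg c p : in_C30_orbit c p -> in_C30_orbit c (scale3 (-1) p).
Proof.
  intros [k [l [Hk [Hl ->]]]]. rewrite scale_scale.
  assert (l = 0%nat \/ l = 1%nat) as [->| ->] by lia.
  - exists k, 1%nat; split; [lia|split; [lia|]]. simpl. f_equal; ring.
  - exists k, 0%nat; split; [lia|split; [lia|]]. simpl. f_equal; ring.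
Qed.

Lemma N_rot p : Noperthedron p -> Noperthedron (rotz (2 * PI / 15) p).
Proof. intros [H|[H|H]]; [left|right;left|right;right]; apply orbit_rot; auto. Qed.
Lemma N_rotm p : Noperthedron p -> Noperthedron (rotz (- (2 * PI / 15)) p).
Proof. intros [H|[H|H]]; [left|right;left|right;right]; apply orbit_rotm; auto. Qed.
Lemma N_neg p : Noperthedron p -> Noperthedron (scale3 (-1) p).
Proof. intros [H|[H|H]]; [left|right;left|right;right]; apply orbit_neg; auto. Qed.

Definition NC := rupert_config Noperthedron.

Lemma refl_config th1 ph1 th2 ph2 a : NC th1 ph1 th2 ph2 a ->
  NC (th1 + PI) (PI - ph1) (th2 + PI) (PI - ph2) (- a).
Proof.
  intros Hc p Hp. rewrite projM_refl, rot2_refl.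
  apply interior_mono with (conv (fun y => imgM th2 ph2 Noperthedron (Fl y))).
  - apply conv_mono. intros y [p' [Hp' Hy]]. exists p'; split; auto.
    rewrite projM_refl, <- Hy, Fl_invol; auto.
  - apply interior_conv_Fl, Hc, Hp.
Qed.

Lemma a_plus th1 ph1 th2 ph2 a : NC th1 ph1 th2 ph2 a -> NC th1 ph1 th2 ph2 (a + PI).
Proof.
  intros Hc p Hp. rewrite rot2_plusPI, <- projM_scale. apply Hc, N_neg, Hp.
Qed.

Lemma a_minus th1 ph1 th2 ph2 a : NC th1 ph1 th2 ph2 a -> NC th1 ph1 th2 ph2 (a - PI).
Proof.
  intros Hc p Hp. 
  assert (Hc' : NC th1 ph1 th2 ph2 ((a - PI) + PI)) by (replace (a - PI + PI) with a by ring; auto).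
  specialize (Hc' _ (N_neg _ Hp)). rewrite rot2_plusPI, projM_scale in Hc'.
  destruct (projM th1 ph1 p); simpl in *. replace r with (- - r) by ring.
  replace r0 with (- - r0) by ring. exact Hc'.
Qed.

Lemma th1_shift b th1 ph1 th2 ph2 a : (forall p, Noperthedron p -> Noperthedron (rotz b p)) ->
  NC th1 ph1 th2 ph2 a -> NC (th1 - b) ph1 th2 ph2 a.
Proof. intros Hb Hc p Hp. rewrite <- projM_rotz. apply Hc, Hb, Hp. Qed.

Lemma th2_shift b th1 ph1 th2 ph2 a : (forall p, Noperthedron p -> Noperthedron (rotz b p)) ->
  NC th1 ph1 th2 ph2 a -> NC th1 ph1 (th2 + b) ph2 a.
Proof.
  intros Hb Hc p Hp. eapply interior_mono; [|apply Hc, Hp].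
  apply conv_mono. intros y [p' [Hp' ->]]. exists (rotz b p'). split.
  - apply Hb, Hp'.
  - rewrite projM_rotz. f_equal. ring.
Qed.

Lemma shift_nat (P : R -> Prop) d : (forall x, P x -> P (x - d)) -> (forall x, P x -> P (x + d)) ->
  forall m x, P x -> P (x - INR m * d) /\ P (x + INR m * d).
Proof.
  intros H1 H2. induction m; intros x Hx.
  - simpl. replace (x - 0 * d) with x by ring. replace (x + 0 * d) with x by ring. auto.
  - rewrite S_INR. destruct (IHm x Hx) as [A B]. split.
    + replace (x - (INR m + 1) * d) with ((x - INR m * d) - d) by ring. auto.
    + replace (x + (INR m + 1) * d) with ((x + INR m * d) + d) by ring. auto.
Qed.

Lemma shift_Z (P : R -> Prop) d : (forall x, P x -> P (x - d)) -> (forall x, P x -> P (x + d)) ->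
  forall n x, P x -> P (x - IZR n * d).
Proof.
  intros H1 H2 n x Hx. destruct n as [|p|p].
  - replace (x - IZR 0 * d) with x by (simpl; ring). auto.
  - change (IZR (Zpos p)) with (IPR p). rewrite <- INR_IPR. apply (shift_nat P d H1 H2), Hx.
  - change (IZR (Zneg p)) with (- IPR p). rewrite <- INR_IPR. replace (x - - INR (Pos.to_nat p) * d) with (x + INR (Pos.to_nat p) * d) by ring.
    apply (shift_nat P d H1 H2), Hx.
Qed.

Lemma reduce d th : 0 < d -> 0 <= th - IZR (Int_part (th / d)) * d <= d.
Proof.
  intros Hd. destruct (base_Int_part (th / d)) as [A B].
  set (n := IZR (Int_part (th / d))) in *.
  assert (th = d * (th / d)) by (field; lra).
  split; nra.
Qed.

Theorem corollary2p4 :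
  rupert Noperthedron ->
  exists th1 th2 ph1 ph2 a,
    0 <= th1 <= 2 * PI / 15 /\ 0 <= th2 <= 2 * PI / 15 /\
    0 <= ph1 <= PI /\ 0 <= ph2 <= PI / 2 /\ - (PI / 2) <= a <= PI / 2 /\
    rupert_config Noperthedron th1 ph1 th2 ph2 a.
Proof.
  intros (th1 & th2 & ph1 & ph2 & a & Hth1 & Hth2 & Hph1 & Hph2 & Ha & Hc).
  pose proof PI_RGT_0 as Hpi.
  assert (S1 : exists th1 th2 ph1 ph2 a, 0 <= ph1 <= PI /\ 0 <= ph2 <= PI / 2 /\
     - PI <= a <= PI /\ NC th1 ph1 th2 ph2 a).
  { destruct (Rle_dec ph2 (PI / 2)).
    - exists th1, th2, ph1, ph2, a. repeat split; try lra. exact Hc.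
    - exists (th1 + PI), (th2 + PI), (PI - ph1), (PI - ph2), (- a).
      repeat split; try lra. apply refl_config, Hc. }
  clear th1 th2 ph1 ph2 a Hth1 Hth2 Hph1 Hph2 Ha Hc.
  destruct S1 as (th1 & th2 & ph1 & ph2 & a & Hph1 & Hph2 & Ha & Hc).
  assert (S2 : exists a, - (PI / 2) <= a <= PI / 2 /\ NC th1 ph1 th2 ph2 a).
  { destruct (Rle_dec a (PI / 2)); [destruct (Rle_dec (- (PI / 2)) a)|].
    - exists a; split; auto; lra.
    - exists (a + PI); split; [lra|]. apply a_plus, Hc.
    - exists (a - PI); split; [lra|]. apply a_minus, Hc. }
  clear a Ha Hc. destruct S2 as (a & Ha & Hc).
  set (d := 2 * PI / 15).
  assert (Hd : 0 < d) by (unfold d; lra).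
  assert (Hd1 : forall th1, NC th1 ph1 th2 ph2 a -> NC (th1 - IZR (Int_part (th1 / d)) * d) ph1 th2 ph2 a).
  { intros t. apply (shift_Z (fun x => NC x ph1 th2 ph2 a)).
    - intros x. apply th1_shift, N_rot.
    - intros x Hx. replace (x + d) with (x - - d) by ring. apply th1_shift; auto. apply N_rotm. }
  pose proof (Hd1 _ Hc) as Hc1. clear Hd1 Hc.
  set (t1 := th1 - IZR (Int_part (th1 / d)) * d) in *.
  assert (Hd2 : forall th2, NC t1 ph1 th2 ph2 a -> NC t1 ph1 (th2 - IZR (Int_part (th2 / d)) * d) ph2 a).
  { intros t. apply (shift_Z (fun x => NC t1 ph1 x ph2 a)).
    - intros x Hx. replace (x - d) with (x + - d) by ring. apply th2_shift; auto. apply N_rotm.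
    - intros x. apply th2_shift, N_rot. }
  pose proof (Hd2 _ Hc1) as Hc2.
  exists t1, (th2 - IZR (Int_part (th2 / d)) * d), ph1, ph2, a.
  repeat split; try lra; try apply reduce; auto; try (apply Hd).
  all: try (unfold t1; apply reduce; auto).
Qed.
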